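(* Let $N\ge2$, $d\ge1$, and let $x(t)$ be a (Carathéodory) solution of $$\dot x_i(t)=\frac{\lambda_i(x)}{N}\sum_{j=1}^N M_{ij}(t)\,\phi_{ij}(x_i,x_j)\,(x_j(t)-x_i(t)),\qquad i=1,\dots,N,$$ with $x_i\in\mathbb{R}^d$, where all $M_{ij}:[0,+\infty)\to[0,1]$ are Lebesgue measurable and $\lambda_i:\mathbb{R}^{Nd}\to\mathbb{R}^+$, $\phi_{ij}:\mathbb{R}^d\times\mathbb{R}^d\to\mathbb{R}^+$ are Lipschitz continuous and strictly positive. Fix $T,\mu>0$ and let $G(t)$ be the $(T,\mu)$-connectivity graph associated to the $M_{ij}$. Define $$\underline m:=\min\{\lambda_i(y)\phi_{ij}(y_i,y_j):\ i,j,\ y\in\mathbb{R}^{Nd},\ |y_k|\le\max_l|x_l(0)|\ \forall k\},$$ $$\overline m:=\max\{\lambda_i(y)\phi_{ij}(y_i,y_j):\ i,j,\ y\in\mathbb{R}^{Nd},\ |y_k|\le\max_l|x_l(0)|\ \forall k\}.$$ Then there exist Lebesgue integrable functions $\widetilde M_{ij}:[0,+\infty)\to[0,\overline m]$ such that $x(t)$ solves the linear system $$\dot x_i=\frac1N\sum_{j=1}^N\widetilde M_{ij}(t)(x_j-x_i),\qquad i=1,\dots,N,$$ and, for every $t\ge0$, the $(T,\underline m\mu)$-connectivity graph $\widetilde G(t)$ associated to the $\widetilde M_{ij}$ contains all arrows of $G(t)$.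
   Context: $|\cdot|$ is the Euclidean norm. Given $T,\mu>0$ and nonnegative measurable functions $M_{ij}$ on $[0,+\infty)$, the $(T,\mu)$-connectivity graph at time $t\ge0$ is the directed graph on nodes $\{1,\dots,N\}$ in which the arrow $i\to j$ exists iff $\frac1T\int_t^{t+T}M_{ij}(s)\,ds\ge\mu$. *)

(* Defs.v *)
From HB Require Import structures.
From mathcomp Require Import all_boot all_order all_algebra.
From mathcomp Require Import all_classical all_reals all_analysis.
Set Implicit Arguments. Unset Strict Implicit. Unset Printing Implicit Defensive.
Import Order.TTheory GRing.Theory Num.Theory.
Import numFieldNormedType.Exports.
Local Open Scope classical_set_scope.
Local Open Scope ring_scope.

Definition state (R : realType) (N d : nat) := 'I_N -> 'rV[R]_d.

Definition eucl (R : realType) (d : nat) (v : 'rV[R]_d) : R :=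
  Num.sqrt (\sum_(k < d) v 0 k ^+ 2).

Definition state_dist (R : realType) (N d : nat) (y z : state R N d) : R :=
  Num.sqrt (\sum_(i < N) \sum_(k < d) (y i 0 k - z i 0 k) ^+ 2).

Definition pair_dist (R : realType) (d : nat) (a b a' b' : 'rV[R]_d) : R :=
  Num.sqrt (\sum_(k < d) (a 0 k - a' 0 k) ^+ 2 + \sum_(k < d) (b 0 k - b' 0 k) ^+ 2).

Definition caratheodory_solution (R : realType) (N d : nat)
  (F : R -> state R N d -> state R N d) (x : R -> state R N d) : Prop :=
  forall t : R, 0 <= t -> forall (i : 'I_N) (k : 'I_d),
    (lebesgue_measure).-integrable `[0, t] (fun s => ((F s (x s) i) 0 k)%:E) /\
    x t i 0 k = x 0 i 0 k +
      Rintegral lebesgue_measure `[0, t] (fun s => (F s (x s) i) 0 k).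

Definition conn_arrow (R : realType) (N : nat) (T mu : R)
  (M : 'I_N -> 'I_N -> R -> R) (t : R) (i j : 'I_N) : Prop :=
  mu <= T^-1 * Rintegral lebesgue_measure `[t, t + T] (M i j).

Definition interaction_values (R : realType) (N d : nat)
  (lam : 'I_N -> state R N d -> R)
  (phi : 'I_N -> 'I_N -> 'rV[R]_d -> 'rV[R]_d -> R) (r : R) : set R :=
  [set v | exists i j (y : state R N d),
      (forall k, eucl (y k) <= r) /\ v = lam i y * phi i j (y i) (y j)].

Definition max_init_norm (R : realType) (N d : nat) (x0 : state R N d) : R :=
  \big[Num.max/0]_(l < N) eucl (x0 l).

(* Main.v *)
Require Import Defs.
From HB Require Import structures.
From mathcomp Require Import all_boot all_order all_algebra.
From mathcomp Require Import all_classical all_reals all_analysis.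
From mathcomp Require Import lra ring.
From mathcomp Require Import measurable_realfun.
Import Order.TTheory GRing.Theory Num.Theory.
Import numFieldNormedType.Exports.
Local Open Scope classical_set_scope.
Local Open Scope ring_scope.

Section helpers.
Variable R : realType.
Notation mu := (@lebesgue_measure R).

Lemma bounded_by (T : Type) (A : set T) (f : T -> R) (C : R) :
  (forall t, A t -> `|f t| <= C) -> [bounded f x | x in A].
Proof.
move=> h; rewrite /bounded_near; near=> M => t At /=.
apply: le_trans (h t At) _; near: M; apply: nbhs_pinfty_ge; exact: num_real.
Unshelve. all: end_near. Qed.

Lemma itv_fin (i : interval R) (a b : R) :
  i = Interval (BSide true a) (BSide false b) \/ i = Interval (BSide false a) (BSide false b)
  \/ i = Interval (BSide true a) (BSide true b) \/ i = Interval (BSide false a) (BSide true b) ->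
  (mu [set` i] < +oo)%E.
Proof.
move=> hi; rewrite lebesgue_measure_itv.
by case: hi => [->|[->|[->|->]]] /=; case: ifP => _; rewrite ?ltry.
Qed.

Lemma int_bd (f : R -> R) (a b C : R) (i : interval R) :
  i = Interval (BSide true a) (BSide false b) \/ i = Interval (BSide false a) (BSide false b)
  \/ i = Interval (BSide true a) (BSide true b) \/ i = Interval (BSide false a) (BSide true b) ->
  measurable_fun [set` i] f -> (forall t, [set` i] t -> `|f t| <= C) ->
  mu.-integrable [set` i] (EFin \o f).
Proof.
move=> hi mf hb; apply: measurable_bounded_integrable => //.
  exact: itv_fin hi.
exact: bounded_by hb.
Qed.

Lemma Rint_split (f : R -> R) (a b c : R) : a <= b -> b <= c ->
  mu.-integrable `[a, c] (EFin \o f) ->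
  \int[mu]_(x in `[a, c]) f x = \int[mu]_(x in `[a, b]) f x + \int[mu]_(x in `]b, c]) f x.
Proof.
move=> ab bc intf.
rewrite (@itv_bndbnd_setU _ _ _ (BRight b)) ?bnd_simp//.
rewrite Rintegral_setU//=.
  by rewrite -itv_bndbnd_setU ?bnd_simp.
apply/disj_set2P; rewrite -subset0 => z/=; rewrite !in_itv/= => -[/andP[_]].
by rewrite leNgt => /negbTE ->.
Qed.

Lemma Rint_le_cst (f : R -> R) (a b C : R) : a <= b ->
  mu.-integrable `]a, b] (EFin \o f) -> (forall s, a < s <= b -> f s <= C) ->
  \int[mu]_(x in `]a, b]) f x <= C * (b - a).
Proof.
move=> ab intf hf.
have ic : mu.-integrable `]a, b] (EFin \o (fun=> C)).
  apply: (@int_bd _ a b `|C|) => //. by right; left.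
have h1 : \int[mu]_(x in `]a, b]) f x <= \int[mu]_(x in `]a, b]) C.
  apply: le_Rintegral => //.
apply: le_trans h1 _.
rewrite Rintegral_cst //= lebesgue_measure_itv /=.
rewrite lte_fin; case: ltP => h /=.
  by [].
have -> : b = a by apply/eqP; rewrite eq_le ab h.
by rewrite subrr mulr0.
Qed.


Lemma scalar_max (N : nat) (i0 : 'I_N) (y : 'I_N -> R -> R)
  (a : 'I_N -> 'I_N -> R -> R) (Y0 K B tf : R) :
  0 <= K -> 0 <= tf ->
  (forall i, y i 0 <= Y0) ->
  (forall i j s, 0 <= s -> s <= tf -> 0 <= a i j s <= K) ->
  (forall i s, 0 <= s -> s <= tf -> `|y i s| <= B) ->
  (forall i, mu.-integrable `[0, tf]
      (EFin \o (fun s => \sum_(j < N) a i j s * (y j s - y i s)))) ->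
  (forall i t, 0 <= t -> t <= tf -> y i t = y i 0 +
      \int[mu]_(s in `[0, t]) (\sum_(j < N) a i j s * (y j s - y i s))) ->
  forall i, y i tf <= Y0.
Proof.
move=> K0 tf0 hY0 ha hB hint heq.
pose g i s := \sum_(j < N) a i j s * (y j s - y i s).
have B0 : 0 <= B by apply: le_trans (hB i0 0 (lexx _) tf0); rewrite normr_ge0.
have intg : forall i u v, 0 <= u -> u <= v -> v <= tf ->
    mu.-integrable `]u, v] (EFin \o g i).
  move=> i u v u0 uv vtf; apply: integrableS (hint i) => //.
  move=> z /=; rewrite !in_itv /= => /andP[uz zv]; apply/andP; split.
    exact: le_trans u0 (ltW uz).
  exact: le_trans zv vtf.
have diff : forall i u v, 0 <= u -> u <= v -> v <= tf ->
    y i v - y i u = \int[mu]_(s in `]u, v]) g i s.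
  move=> i u v u0 uv vtf.
  rewrite (heq i v) ?(le_trans u0 uv) // (heq i u) ?(le_trans uv vtf) //.
  rewrite (@Rint_split (g i) 0 u v) //; first by lra.
  apply: integrableS (hint i) => //.
  move=> z /=; rewrite !in_itv /= => /andP[z0 zv]; apply/andP; split => //.
  exact: le_trans zv vtf.
pose C := (K * (B + B)) *+ N.
have C0 : 0 <= C by rewrite /C mulrn_wge0 // mulr_ge0 // addr_ge0.
have gC : forall i s, 0 <= s <= tf -> g i s <= C.
  move=> i s /andP[s0 stf]; rewrite /g /C.
  have -> : (K * (B + B)) *+ N = \sum_(j < N) (K * (B + B)).
    by rewrite sumr_const card_ord.
  apply: ler_sum => j _.
  have /andP[a0 aK] := ha i j s s0 stf.
  apply: le_trans (ler_norm _) _; rewrite normrM (ger0_norm a0).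
  apply: ler_pM => //.
  apply: le_trans (ler_normB _ _) _.
  by apply: lerD; apply: hB.
have gp : forall i s c, 0 <= s -> s <= tf -> Y0 < y i s ->
    (forall j, Num.max (y j s - Y0) 0 <= c) -> g i s <= (K * c) *+ N.
  move=> i s c s0 stf hy hc; rewrite /g.
  have -> : (K * c) *+ N = \sum_(j < N) (K * c) by rewrite sumr_const card_ord.
  apply: ler_sum => j _.
  have /andP[a0 aK] := ha i j s s0 stf.
  have c0 : 0 <= c by apply: le_trans (hc j); rewrite le_max lexx orbT.
  have h1 : y j s - y i s <= c.
    apply: le_trans (hc j); rewrite le_max; apply/orP; left; lra.
  apply: le_trans (ler_wpM2l a0 h1) _.
  exact: ler_wpM2r.
pose KN := K *+ N.
have KN0 : 0 <= KN by rewrite /KN mulrn_wge0.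
pose dl := (2 * (KN + 1))^-1.
have dl0 : 0 < dl by rewrite /dl invr_gt0; lra.
have keyd : forall c, 0 <= c -> (K * c) *+ N * dl <= c / 2.
  move=> c c0; rewrite -mulrnAl -/KN.
  have ht : 0 < 2 * (KN + 1) by lra.
  rewrite -(ler_pM2r ht) /dl mulfVK ?gt_eqF //.
  have -> : c / 2 * (2 * (KN + 1)) = c * (KN + 1).
    by rewrite mulrA mulfVK // ?pnatr_eq0.
  nra.
pose W := fun n : nat => forall i s, 0 <= s -> s <= tf -> s <= n%:R * dl -> y i s <= Y0.
have W0 : W 0%N.
  move=> i s s0 stf; rewrite mul0r => sle.
  by have -> : s = 0 by apply/eqP; rewrite eq_le sle s0.
have WS : forall n, W n -> W n.+1.
  move=> n Wn.
  have nd0 : 0 <= n%:R * dl by rewrite mulr_ge0 // ltW.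
  have nSd : n.+1%:R * dl = n%:R * dl + dl by rewrite -addn1 natrD mulrDl mul1r.
  pose Sw := [set z | exists j u, [/\ 0 <= u, u <= tf, u <= n.+1%:R * dl &
                                  z = Num.max (y j u - Y0) 0]].
  have Sw_ne : Sw !=set0.
    exists (Num.max (y i0 0 - Y0) 0); exists i0, 0; split => //.
    by rewrite nSd; lra.
  have Sw_ub : has_ubound Sw.
    exists (B + `|Y0|) => z [j [u [u0 utf _ ->]]].
    rewrite ge_max; apply/andP; split; last by rewrite addr_ge0.
    apply: le_trans (ler_norm _) _; apply: le_trans (ler_normB _ _) _.
    by apply: lerD => //; apply: hB.
  set c := sup Sw.
  have c0 : 0 <= c.
    apply: le_trans (ub_le_sup Sw_ub (x := Num.max (y i0 0 - Y0) 0) _).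
      by rewrite le_max lexx orbT.
    by exists i0, 0; split => //; rewrite nSd; lra.
  have half : forall z, Sw z -> z <= c / 2.
    move=> z [j [u [u0 utf un ->]]].
    case: (leP (y j u) Y0) => hyu.
      by rewrite max_r ?subr_le0 // divr_ge0.
    rewrite max_l; last by rewrite subr_ge0 ltW.
    have nu : n%:R * dl < u.
      rewrite ltNge; apply/negP => h.
      by move: (Wn j u u0 utf h); rewrite leNgt hyu.
    pose Ss := [set w | 0 <= w /\ w <= u /\ y j w <= Y0].
    have nSs : Ss (n%:R * dl).
      split => //; split; first exact: ltW.
      apply: Wn => //.
      exact: le_trans (ltW nu) utf.
    have Ss_ub : has_ubound Ss by exists u => w [_ []].
    set sg := sup Ss.
    have sg_ge : n%:R * dl <= sg := ub_le_sup Ss_ub nSs.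
    have sg_le : sg <= u.
      by apply: ge_sup; [exists (n%:R * dl) | move=> w [_ []]].
    have sg0 : 0 <= sg by exact: le_trans sg_ge.
    have sgtf : sg <= tf by exact: le_trans utf.
    have ysg : y j sg <= Y0.
      apply/ler_addgt0Pr => e e0.
      pose e' := e / (C + 1).
      have e'0 : 0 < e' by rewrite /e' divr_gt0 //; lra.
      have [w Sww hw] := sup_adherent e'0 (conj (ex_intro _ _ nSs) Ss_ub).
      have wle : w <= sg := ub_le_sup Ss_ub Sww.
      case: Sww => w0 [wu yw].
      have hd := diff j w sg w0 wle sgtf.
      have hi : \int[mu]_(x in `]w, sg]) g j x <= C * (sg - w).
        apply: (@Rint_le_cst (g j) w sg C wle (intg j w sg w0 wle sgtf)).
        move=> s /andP[ws ssg]; apply: gC; apply/andP; split.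
          exact: le_trans w0 (ltW ws).
        exact: le_trans ssg sgtf.
      have hw' : sg - e' < w := hw.
      have h4 : C * (sg - w) <= C * e' by apply: ler_wpM2l => //; lra.
      have h5 : C * e' <= e.
        rewrite /e' mulrA ler_pdivrMr; [nra | lra].
      lra.
    have hgle : forall w, w \in `]sg, u] -> g j w <= (K * c) *+ N.
      move=> w; rewrite in_itv /= => /andP[sw wu].
      have w0 : 0 <= w by exact: le_trans sg0 (ltW sw).
      have wtf : w <= tf by exact: le_trans wu utf.
      apply: gp => //.
        rewrite ltNge; apply/negP => hw.
        have : w <= sg by apply: (ub_le_sup Ss_ub (x := w)).
        by rewrite leNgt sw.
      move=> k; apply: (ub_le_sup Sw_ub (x := Num.max (y k w - Y0) 0)).
      exists k, w; split => //.
      exact: le_trans wu un.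
    have hi : \int[mu]_(x in `]sg, u]) g j x <= (K * c) *+ N * (u - sg).
      apply: (@Rint_le_cst (g j) sg u _ sg_le (intg j sg u sg0 sg_le utf)).
      by move=> w hw; apply: hgle; rewrite in_itv.
    have hd := diff j sg u sg0 sg_le utf.
    have Kc0 : 0 <= (K * c) *+ N by rewrite mulrn_wge0 // mulr_ge0.
    have h2 : (K * c) *+ N * (u - sg) <= (K * c) *+ N * dl.
      apply: ler_wpM2l => //; lra.
    have := keyd c c0; lra.
  have cle : c <= c / 2 := ge_sup Sw_ne half.
  have cle0 : c <= 0 by lra.
  move=> i s s0 stf sn.
  have : Num.max (y i s - Y0) 0 <= c.
    apply: (ub_le_sup Sw_ub (x := Num.max (y i s - Y0) 0)).
    by exists i, s; split.
  rewrite ge_max => /andP[h _]; lra.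
have Wall : forall n, W n by elim => [|n IH]; [exact: W0 | exact: WS].
have [n hn] : exists n : nat, tf <= n%:R * dl.
  exists (Num.Def.archi_bound (tf / dl)).
  rewrite -ler_pdivrMr //; apply: ltW; apply: archi_boundP.
  by rewrite divr_ge0 // ltW.
move=> i; exact: Wall n i tf tf0 (lexx _) hn.
Qed.


Lemma le_sum_nonneg (n : nat) (f : 'I_n -> R) i :
  (forall j, 0 <= f j) -> f i <= \sum_(j < n) f j.
Proof. by move=> h; rewrite (bigD1 i) //= lerDl sumr_ge0. Qed.

Lemma sq_le (t c : R) : `|t| <= c -> t ^+ 2 <= c ^+ 2.
Proof.
move=> h; rewrite -real_normK ?num_real // !expr2.
by apply: ler_pM => //; rewrite normr_ge0.
Qed.

Lemma sum_sq_bd (m : nat) (t : 'I_m -> R) (c : R) :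
  (forall k, `|t k| <= c) -> \sum_(k < m) t k ^+ 2 <= m%:R * c ^+ 2.
Proof.
move=> h; apply: (@le_trans _ _ (\sum_(k < m) c ^+ 2)).
  by apply: ler_sum => k _; exact: sq_le.
by rewrite sumr_const card_ord mulr_natl.
Qed.

Lemma sum2_sq_bd (n m : nat) (t : 'I_n -> 'I_m -> R) (c : R) :
  (forall j k, `|t j k| <= c) ->
  \sum_(j < n) \sum_(k < m) t j k ^+ 2 <= (n * m)%:R * c ^+ 2.
Proof.
move=> h; apply: (@le_trans _ _ (\sum_(j < n) (m%:R * c ^+ 2))).
  by apply: ler_sum => j _; exact: sum_sq_bd.
by rewrite sumr_const card_ord mulr_natl -mulrnA mulr_natl mulnC.
Qed.

Lemma sqrt_bd (S c : R) (n : nat) : 0 <= c -> S <= n%:R * c ^+ 2 ->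
  Num.sqrt S <= Num.sqrt n%:R * c.
Proof.
move=> c0 h; apply: le_trans (ler_wsqrtr h) _.
by rewrite sqrtrM ?ler0n // sqrtr_sqr ger0_norm.
Qed.

Lemma coord_le_eucl (d : nat) (v : 'rV[R]_d) k : `|v 0 k| <= eucl v.
Proof.
rewrite /eucl -sqrtr_sqr; apply: ler_wsqrtr.
by apply: (@le_sum_nonneg _ (fun k => v 0 k ^+ 2)) => j; rewrite sqr_ge0.
Qed.

Lemma eucl_ge0 (d : nat) (v : 'rV[R]_d) : 0 <= eucl v.
Proof. exact: sqrtr_ge0. Qed.

Lemma eucl_sq (d : nat) (v : 'rV[R]_d) : eucl v ^+ 2 = \sum_(k < d) v 0 k ^+ 2.
Proof. by rewrite /eucl sqr_sqrtr // sumr_ge0 // => k _; rewrite sqr_ge0. Qed.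

Lemma Rint_lin (D : set R) (m : nat) (c : 'I_m -> R) (f : 'I_m -> R -> R) :
  measurable D ->
  (forall k, mu.-integrable D (EFin \o f k)) ->
  mu.-integrable D (EFin \o (fun s => \sum_(k < m) c k * f k s)) /\
  \int[mu]_(s in D) (\sum_(k < m) c k * f k s) =
    \sum_(k < m) c k * \int[mu]_(s in D) f k s.
Proof.
move=> mD hf.
rewrite /index_enum /=; elim: (Finite.enum _) => [|k r [IHi IHe]].
  have -> : (fun s => \sum_(k <- [::]) c k * f k s) = fun=> 0.
    by apply/funext => s; rewrite big_nil.
  rewrite big_nil; split; last by rewrite Rintegral_cst // mul0r.
  exact: (integrable0 _ _).
have ik : mu.-integrable D (EFin \o (fun s => c k * f k s)).
  have := integrableZl _ (c k) (hf k).
  move=> /(_ mD).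
  by apply: eq_integrable => // s _ /=.
split.
  under eq_fun do rewrite big_cons.
  have := integrableD _ ik IHi; move=> /(_ mD).
  by apply: eq_integrable => // s _ /=.
under eq_Rintegral do rewrite big_cons.
rewrite RintegralD // big_cons RintegralZl // IHe //.
Qed.

Lemma cont_of_loclip (f : R -> R) :
  (forall s0, exists C, forall u, `|u - s0| < 1 -> `|f u - f s0| <= C * `|u - s0|) ->
  continuous f.
Proof.
move=> h s0; have [C hC] := h s0.
apply/cvgrPdist_le => e e0.
pose dl := Num.min 1 (e / (`|C| + 1)).
have dl0 : 0 < dl by rewrite lt_min ltr01 divr_gt0 // ltr_pwDr.
apply/nbhs_ballP; exists dl => // u; rewrite /ball_ /= => hu.
rewrite distrC in hu.
have hu1 : `|u - s0| < 1 by apply: lt_le_trans hu _; rewrite ge_min lexx.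
rewrite distrC; apply: le_trans (hC u hu1) _.
have hde : `|u - s0| <= e / (`|C| + 1).
  by apply: ltW; apply: lt_le_trans hu _; rewrite ge_min lexx orbT.
apply: le_trans (_ : `|C| * `|u - s0| <= _).
  by apply: ler_wpM2r; [exact: normr_ge0 | exact: ler_norm].
apply: le_trans (_ : `|C| * (e / (`|C| + 1)) <= _).
  by apply: ler_wpM2l => //; exact: normr_ge0.
rewrite mulrA ler_pdivrMr ?ltr_pwDr //; nra.
Qed.


Lemma max0_lip (u w : R) : `|Num.max u 0 - Num.max w 0| <= `|u - w|.
Proof.
have A := ler_norm (u - w); have B := ler_norm (w - u).
rewrite distrC in B.
rewrite /Num.max /Order.max.
case: (ltP u 0) => h1; case: (ltP w 0) => h2; rewrite ler_norml; apply/andP; split; lra.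
Qed.

Lemma Fcoord (n d : nat) (c : R) (b : 'I_n -> R) (y : 'I_n -> 'rV[R]_d) i k :
  ((c *: \sum_(j < n) b j *: (y j - y i)) 0 k) =
  c * \sum_(j < n) b j * (y j 0 k - y i 0 k).
Proof.
rewrite mxE summxE; congr (_ * _); apply: eq_bigr => j _.
by rewrite !mxE.
Qed.


Lemma bigmax_ge (n : nat) (f : 'I_n -> R) i : f i <= \big[Num.max/0]_(l < n) f l.
Proof.
have : i \in index_enum 'I_n by rewrite mem_index_enum.
elim: (index_enum _) => //= a s IH; rewrite inE big_cons => /orP[/eqP<-|/IH h].
  by rewrite le_max lexx.
by rewrite le_max h orbT.
Qed.

Lemma bigmax_ge0 (n : nat) (f : 'I_n -> R) : 0 <= \big[Num.max/0]_(l < n) f l.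
Proof.
elim: (index_enum _) => /= [|a s IH]; first by rewrite big_nil.
by rewrite big_cons le_max IH orbT.
Qed.

End helpers.

Theorem proposition2 (R : realType) (N d : nat) (hN : (2 <= N)%N) (hd : (1 <= d)%N)
  (M : 'I_N -> 'I_N -> R -> R)
  (lam : 'I_N -> state R N d -> R)
  (phi : 'I_N -> 'I_N -> 'rV[R]_d -> 'rV[R]_d -> R)
  (hMmeas : forall i j, measurable_fun `[0 : R, +oo[ (M i j))
  (hMrange : forall i j t, 0 <= t -> 0 <= M i j t <= 1)
  (hlam_lip : forall i, exists L : R, forall y z : state R N d,
      `|lam i y - lam i z| <= L * state_dist y z)
  (hlam_pos : forall i y, 0 < lam i y)
  (hphi_lip : forall i j, exists L : R, forall a b a' b' : 'rV[R]_d,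
      `|phi i j a b - phi i j a' b'| <= L * pair_dist a b a' b')
  (hphi_pos : forall i j a b, 0 < phi i j a b)
  (T mu : R) (hT : 0 < T) (hmu : 0 < mu)
  (x : R -> state R N d)
  (hx : caratheodory_solution
          (fun s (y : state R N d) i =>
             (lam i y / N%:R) *:
               \sum_(j < N) (M i j s * phi i j (y i) (y j)) *: (y j - y i)) x) :
  let r := max_init_norm (x 0) in
  let m_lo := inf (interaction_values lam phi r) in
  let m_hi := sup (interaction_values lam phi r) in
  exists Mt : 'I_N -> 'I_N -> R -> R,
    (forall i j, measurable_fun `[0 : R, +oo[ (Mt i j)) /\
    (forall i j t, 0 <= t -> 0 <= Mt i j t <= m_hi) /\
    caratheodory_solution
      (fun s (y : state R N d) i =>
         N%:R^-1 *: \sum_(j < N) Mt i j s *: (y j - y i)) x /\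
    (forall t, 0 <= t -> forall i j,
        conn_arrow T mu M t i j -> conn_arrow T (m_lo * mu) Mt t i j).
Proof.
move=> r m_lo m_hi.
pose F := fun s i k => ((lam i (x s) / N%:R) *:
   \sum_(j < N) (M i j s * phi i j (x s i) (x s j)) *: (x s j - x s i)) 0 k.
have hF : forall t, 0 <= t -> forall i k,
    (lebesgue_measure).-integrable `[0, t] (EFin \o (fun s => F s i k)) /\
    x t i 0 k = x 0 i 0 k + \int[lebesgue_measure]_(s in `[0, t]) F s i k := hx.
have Fc : forall s i k, F s i k = lam i (x s) / N%:R *
   \sum_(j < N) (M i j s * phi i j (x s i) (x s j)) * (x s j 0 k - x s i 0 k).
  by move=> s i k; rewrite /F Fcoord.
have N0 : (0 < N)%N by apply: leq_trans hN.
have N1 : (1 : R) <= N%:R by rewrite ler1n.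
have [Ll hLl] := choice hlam_lip.
have [Lp hLp] := choice (fun p : 'I_N * 'I_N => hphi_lip p.1 p.2).
pose z0 : state R N d := fun _ => 0.
pose Lam c := \sum_(i < N) (`|lam i z0| + `|Ll i| * (Num.sqrt (N * d)%:R * c)).
pose Phi c := \sum_(i < N) \sum_(j < N)
   (`|phi i j 0 0| + `|Lp (i, j)| * (Num.sqrt (d + d)%:R * c)).
have lamb : forall c (y : state R N d), 0 <= c ->
    (forall j k, `|y j 0 k| <= c) -> forall i, lam i y <= Lam c.
  move=> c y c0 hy i.
  have hdist : state_dist y z0 <= Num.sqrt (N * d)%:R * c.
    rewrite /state_dist; apply: sqrt_bd => //; apply: sum2_sq_bd => j k.
    by rewrite /z0 mxE subr0; exact: hy.
  have h := hLl i y z0.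
  have h2 : Ll i * state_dist y z0 <= `|Ll i| * (Num.sqrt (N * d)%:R * c).
    apply: le_trans (ler_wpM2r (sqrtr_ge0 _) (ler_norm _)) _.
    by apply: ler_wpM2l => //; exact: normr_ge0.
  have h3 := ler_norm (lam i y - lam i z0).
  have h4 := ler_norm (lam i z0).
  have h1 : lam i y <= `|lam i z0| + `|Ll i| * (Num.sqrt (N * d)%:R * c) by lra.
  apply: le_trans h1 _.
  apply: (@le_sum_nonneg _ _ (fun i => `|lam i z0| + `|Ll i| * (Num.sqrt (N * d)%:R * c))).
  by move=> j; rewrite addr_ge0 // mulr_ge0 // mulr_ge0 // sqrtr_ge0.
have phib : forall c (a b : 'rV[R]_d), 0 <= c ->
    (forall k, `|a 0 k| <= c) -> (forall k, `|b 0 k| <= c) ->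
    forall i j, phi i j a b <= Phi c.
  move=> c a b c0 ha hb i j.
  have hdist : pair_dist a b 0 0 <= Num.sqrt (d + d)%:R * c.
    rewrite /pair_dist; apply: sqrt_bd => //.
    rewrite natrD mulrDl; apply: lerD; apply: sum_sq_bd => k;
      by rewrite mxE subr0.
  have h := hLp (i, j) a b 0 0.
  have h2 : Lp (i, j) * pair_dist a b 0 0 <= `|Lp (i, j)| * (Num.sqrt (d + d)%:R * c).
    apply: le_trans (ler_wpM2r (sqrtr_ge0 _) (ler_norm _)) _.
    by apply: ler_wpM2l => //; exact: normr_ge0.
  have h3 := ler_norm (phi i j a b - phi i j 0 0).
  have h4 := ler_norm (phi i j 0 0).
  have h1 : phi i j a b <= `|phi i j 0 0| + `|Lp (i, j)| * (Num.sqrt (d + d)%:R * c).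
    simpl in h; lra.
  apply: le_trans h1 _.
  have hnn : forall i j, 0 <= `|phi i j 0 0| + `|Lp (i, j)| * (Num.sqrt (d + d)%:R * c).
    by move=> i' j'; rewrite addr_ge0 // mulr_ge0 // mulr_ge0 // sqrtr_ge0.
  apply: le_trans (_ : _ <= \sum_(j' < N) (`|phi i j' 0 0| + `|Lp (i, j')| * (Num.sqrt (d + d)%:R * c))) _.
    exact: (@le_sum_nonneg _ _ (fun j' => _)).
  apply: (@le_sum_nonneg _ _ (fun i' => \sum_(j' < N) _)) => i'.
  by apply: sumr_ge0 => j' _.
have window : forall t0, 0 <= t0 -> exists Bx Cx, [/\ 0 <= Bx, 0 <= Cx,
    (forall s, 0 <= s -> s <= t0 -> forall j k, `|x s j 0 k| <= Bx) &
    (forall u w, 0 <= w -> w <= u -> u <= t0 -> forall j k,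
        `|x u j 0 k - x w j 0 k| <= Cx * (u - w))].
  move=> t0 t00.
  pose Bx := \sum_(j < N) \sum_(k < d)
     (`|x 0 j 0 k| + \int[lebesgue_measure]_(s in `[0, t0]) `|F s j k|).
  have tnn : forall j k, 0 <= `|x 0 j 0 k| + \int[lebesgue_measure]_(s in `[0, t0]) `|F s j k|.
    by move=> j k; rewrite addr_ge0 // Rintegral_ge0.
  have Bx0 : 0 <= Bx by apply: sumr_ge0 => j _; apply: sumr_ge0 => k _.
  have Bxb : forall s, 0 <= s -> s <= t0 -> forall j k, `|x s j 0 k| <= Bx.
    move=> s s0 st j k.
    have [hi1 he1] := hF s s0 j k.
    have [hi0 _] := hF t0 t00 j k.
    rewrite he1; apply: le_trans (ler_normD _ _) _.
    apply: (@le_trans _ _ (`|x 0 j 0 k| + \int[lebesgue_measure]_(s in `[0, t0]) `|F s j k|)).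
      apply: lerD => //.
      apply: le_trans (le_normr_Rintegral _ hi1) _ => //.
      rewrite (@Rint_split _ (fun s => `|F s j k|) 0 s t0) //.
        by rewrite lerDl Rintegral_ge0.
      exact: integrable_norm.
    apply: le_trans (_ : _ <= \sum_(k' < d) (`|x 0 j 0 k'| +
       \int[lebesgue_measure]_(s in `[0, t0]) `|F s j k'|)) _.
      exact: (@le_sum_nonneg _ _ (fun k' => _)).
    apply: (@le_sum_nonneg _ _ (fun j' => \sum_(k' < d) _)) => j'.
    by apply: sumr_ge0 => k' _.
  pose CF := Lam Bx * ((Phi Bx * (Bx + Bx)) *+ N).
  have Lam0 : forall c, 0 <= c -> 0 <= Lam c.
    by move=> c c0; apply: sumr_ge0 => i _; rewrite addr_ge0 // mulr_ge0 // mulr_ge0 // sqrtr_ge0.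
  have Phi0 : forall c, 0 <= c -> 0 <= Phi c.
    move=> c c0; apply: sumr_ge0 => i _; apply: sumr_ge0 => j _.
    by rewrite addr_ge0 // mulr_ge0 // mulr_ge0 // sqrtr_ge0.
  have CF0 : 0 <= CF by rewrite mulr_ge0 ?Lam0 // mulrn_wge0 // mulr_ge0 ?Phi0 // addr_ge0.
  have Fb : forall s, 0 <= s -> s <= t0 -> forall j k, `|F s j k| <= CF.
    move=> s s0 st j k; rewrite Fc normrM.
    apply: ler_pM; [exact: normr_ge0 | exact: normr_ge0 | |].
      have lp := hlam_pos j (x s).
      rewrite ger0_norm; last by rewrite divr_ge0 ?ler0n // ltW.
      apply: le_trans _ (lamb Bx (x s) Bx0 (Bxb s s0 st) j).
      rewrite ler_pdivrMr ?ltr0n //; nra.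
    apply: le_trans (ler_norm_sum _ _ _) _.
    have -> : (Phi Bx * (Bx + Bx)) *+ N = \sum_(l < N) (Phi Bx * (Bx + Bx)).
      by rewrite sumr_const card_ord.
    apply: ler_sum => l _; rewrite normrM.
    apply: ler_pM; [exact: normr_ge0 | exact: normr_ge0 | |].
      have /andP[M0 M1] := hMrange j l s s0.
      have pp := hphi_pos j l (x s j) (x s l).
      rewrite ger0_norm; last by rewrite mulr_ge0 // ltW.
      apply: le_trans _ (phib Bx _ _ Bx0 (Bxb s s0 st j) (Bxb s s0 st l) j l).
      nra.
    apply: le_trans (ler_normB _ _) _.
    by apply: lerD; apply: Bxb.
  exists Bx, CF; split => //.
  move=> u w w0 wu ut j k.
  have u0 : 0 <= u by exact: le_trans wu.
  have [hiu heu] := hF u u0 j k.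
  have [_ hew] := hF w w0 j k.
  rewrite heu hew (@Rint_split _ (fun s => F s j k) 0 w u) //.
  set I1 := \int[lebesgue_measure]_(s in `[0, w]) F s j k.
  set I2 := \int[lebesgue_measure]_(s in `]w, u]) F s j k.
  have -> : x 0 j 0 k + (I1 + I2) - (x 0 j 0 k + I1) = I2 by ring.
  have hi2 : (lebesgue_measure).-integrable `]w, u] (EFin \o (fun s => F s j k)).
    apply: integrableS hiu => //.
    move=> z /=; rewrite !in_itv /= => /andP[wz zu]; apply/andP; split => //.
    exact: le_trans w0 (ltW wz).
  apply: le_trans (le_normr_Rintegral _ hi2) _ => //.
  apply: Rint_le_cst => //; first exact: integrable_norm.
  move=> s /andP[ws su]; apply: Fb.
    exact: le_trans w0 (ltW ws).
  exact: le_trans su ut.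
have Lam0 : forall c, 0 <= c -> 0 <= Lam c.
  by move=> c c0; apply: sumr_ge0 => i _; rewrite addr_ge0 // mulr_ge0 // mulr_ge0 // sqrtr_ge0.
have Phi0 : forall c, 0 <= c -> 0 <= Phi c.
  move=> c c0; apply: sumr_ge0 => i _; apply: sumr_ge0 => j _.
  by rewrite addr_ge0 // mulr_ge0 // mulr_ge0 // sqrtr_ge0.
have r0 : 0 <= r by rewrite /r /max_init_norm; exact: bigmax_ge0.
have hx0 : forall j, \sum_(k < d) x 0 j 0 k ^+ 2 <= r ^+ 2.
  move=> j; rewrite -eucl_sq; apply: sq_le.
  rewrite ger0_norm ?eucl_ge0 // /r /max_init_norm.
  exact: (@bigmax_ge R N (fun l => eucl (x 0 l))).
have ball : forall t, 0 <= t -> forall i, eucl (x t i) <= r.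
  move=> t0 t00 i.
  have [Bx [Cx [Bx0 Cx0 Bxb _]]] := window t0 t00.
  pose v := x t0 i.
  pose y := fun j s => \sum_(k < d) v 0 k * x s j 0 k.
  pose a := fun j l s => lam j (x s) / N%:R * (M j l s * phi j l (x s j) (x s l)).
  pose K := Lam Bx / N%:R * Phi Bx.
  pose B := \sum_(k < d) `|v 0 k| * Bx.
  pose V := \sum_(k < d) v 0 k ^+ 2.
  pose Y0 := (V + r ^+ 2) / 2.
  have K0 : 0 <= K by rewrite mulr_ge0 ?divr_ge0 ?Lam0 ?Phi0.
  have hY0 : forall j, y j 0 <= Y0.
    move=> j; rewrite /y /Y0.
    apply: (@le_trans _ _ (\sum_(k < d) ((v 0 k ^+ 2 + x 0 j 0 k ^+ 2) / 2))).
      apply: ler_sum => k _.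
      have := sqr_ge0 (v 0 k - x 0 j 0 k); nra.
    rewrite -mulr_suml big_split /=.
    apply: ler_wpM2r => //; apply: lerD => //; exact: hx0.
  have ha : forall j l s, 0 <= s -> s <= t0 -> 0 <= a j l s <= K.
    move=> j l s s0 st.
    have /andP[M0 M1] := hMrange j l s s0.
    have pp := hphi_pos j l (x s j) (x s l).
    have lp := hlam_pos j (x s).
    apply/andP; split.
      by rewrite /a mulr_ge0 ?divr_ge0 ?mulr_ge0 // ltW.
    apply: ler_pM.
    - by rewrite divr_ge0 // ltW.
    - by rewrite mulr_ge0 // ltW.
    - apply: ler_wpM2r; first by rewrite invr_ge0.
      exact: lamb Bx (x s) Bx0 (Bxb s s0 st) j.
    - apply: le_trans _ (phib Bx _ _ Bx0 (Bxb s s0 st j) (Bxb s s0 st l) j l).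
      nra.
  have hB : forall j s, 0 <= s -> s <= t0 -> `|y j s| <= B.
    move=> j s s0 st; apply: le_trans (ler_norm_sum _ _ _) _.
    apply: ler_sum => k _; rewrite normrM.
    by apply: ler_wpM2l; [exact: normr_ge0 | exact: Bxb].
  have geq : forall j s, \sum_(l < N) a j l s * (y l s - y j s) =
      \sum_(k < d) v 0 k * F s j k.
    move=> j s.
    rewrite (eq_bigr (fun l => \sum_(k < d) (a j l s * (v 0 k * x s l 0 k - v 0 k * x s j 0 k)))); last first.
      by move=> l _; rewrite /y -sumrB mulr_sumr.
    rewrite exchange_big /=; apply: eq_bigr => k _; rewrite Fc.
    rewrite !mulr_sumr; apply: eq_bigr => l _; rewrite /a; ring.
  have geqf : forall j, (fun s => \sum_(l < N) a j l s * (y l s - y j s)) =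
      (fun s => \sum_(k < d) v 0 k * F s j k).
    by move=> j; apply/funext => s; exact: geq.
  have hint : forall j, (lebesgue_measure).-integrable `[0, t0]
      (EFin \o (fun s => \sum_(l < N) a j l s * (y l s - y j s))).
    move=> j; rewrite geqf.
    have [h1 _] := @Rint_lin R _ d (fun k => v 0 k) (fun k s => F s j k) (measurable_itv _)
      (fun k => (hF t0 t00 j k).1).
    exact: h1.
  have heq : forall j t, 0 <= t -> t <= t0 -> y j t = y j 0 +
      \int[lebesgue_measure]_(s in `[0, t]) (\sum_(l < N) a j l s * (y l s - y j s)).
    move=> j t t0' tt0; rewrite geqf.
    have [_ h2] := @Rint_lin R _ d (fun k => v 0 k) (fun k s => F s j k) (measurable_itv `[0, t])
      (fun k => (hF t t0' j k).1).
    rewrite h2 /y -big_split /=; apply: eq_bigr => k _.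
    by rewrite -mulrDr -(hF t t0' j k).2.
  have := @scalar_max R N i y a Y0 K B t0 K0 t00 hY0 ha hB hint heq i.
  have -> : y i t0 = V by rewrite /y /V; apply: eq_bigr => k _; rewrite expr2.
  rewrite /Y0 => hV.
  have hV2 : V <= r ^+ 2 by lra.
  rewrite /eucl -/v -/V -(ger0_norm r0) -sqrtr_sqr.
  exact: ler_wsqrtr.
have xlip : forall s0, exists Cx, 0 <= Cx /\ forall u j k, `|u - s0| < 1 ->
    `|x (Num.max u 0) j 0 k - x (Num.max s0 0) j 0 k| <= Cx * `|u - s0|.
  move=> s0.
  have s'0 : 0 <= Num.max s0 0 by rewrite le_max lexx orbT.
  have t00 : 0 <= Num.max s0 0 + 1 by lra.
  have [Bx [Cx [Bx0 Cx0 _ Lip]]] := window _ t00.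
  exists Cx; split => // u j k hu.
  have du := @max0_lip R u s0.
  have u'0 : 0 <= Num.max u 0 by rewrite le_max lexx orbT.
  have hn := ler_norm (Num.max u 0 - Num.max s0 0).
  have u't : Num.max u 0 <= Num.max s0 0 + 1 by lra.
  apply: le_trans (_ : Cx * `|Num.max u 0 - Num.max s0 0| <= _); last first.
    by apply: ler_wpM2l.
  case: (leP (Num.max s0 0) (Num.max u 0)) => h.
    rewrite (ger0_norm (x := Num.max u 0 - _)) ?subr_ge0 //.
    by apply: Lip => //; lra.
  rewrite distrC (distrC (Num.max u 0)) (ger0_norm (x := Num.max s0 0 - _)); last first.
    by rewrite subr_ge0 ltW.
  by apply: Lip => //; [exact: ltW | lra].
have contlam : forall i, continuous (fun s : R => lam i (x (Num.max s 0))).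
  move=> i; apply: cont_of_loclip => s0.
  have [Cx [Cx0 hC]] := xlip s0.
  exists (`|Ll i| * (Num.sqrt (N * d)%:R * Cx)) => u hu.
  apply: le_trans (hLl i _ _) _.
  apply: le_trans (ler_wpM2r (sqrtr_ge0 _) (ler_norm _)) _.
  rewrite -mulrA -mulrA; apply: ler_wpM2l; first exact: normr_ge0.
  apply: sqrt_bd; first by rewrite mulr_ge0.
  apply: sum2_sq_bd => j k; exact: hC.
have contphi : forall i j, continuous (fun s : R =>
    phi i j (x (Num.max s 0) i) (x (Num.max s 0) j)).
  move=> i j; apply: cont_of_loclip => s0.
  have [Cx [Cx0 hC]] := xlip s0.
  exists (`|Lp (i, j)| * (Num.sqrt (d + d)%:R * Cx)) => u hu.
  apply: le_trans (hLp (i, j) _ _ _ _) _.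
  apply: le_trans (ler_wpM2r (sqrtr_ge0 _) (ler_norm _)) _.
  rewrite -mulrA -mulrA; apply: ler_wpM2l; first exact: normr_ge0.
  apply: sqrt_bd; first by rewrite mulr_ge0.
  rewrite natrD mulrDl; apply: lerD; apply: sum_sq_bd => k; exact: hC.
have inpos : forall s, [set` `[0 : R, +oo[] s -> Num.max s 0 = s.
  by move=> s; rewrite /= in_itv /= andbT => s0; rewrite max_l.
have mlam : forall i, measurable_fun `[0 : R, +oo[ (fun s => lam i (x s)).
  move=> i; apply: (eq_measurable_fun (fun s : R => lam i (x (Num.max s 0)))).

    by move=> s; rewrite inE => /inpos ->.
  apply: measurable_funS (continuous_measurable_fun (contlam i)) => //.
have mphi : forall i j, measurable_fun `[0 : R, +oo[
    (fun s => phi i j (x s i) (x s j)).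
  move=> i j; apply: (eq_measurable_fun (fun s : R =>
     phi i j (x (Num.max s 0) i) (x (Num.max s 0) j))).
    by move=> s; rewrite inE => /inpos ->.
  apply: measurable_funS (continuous_measurable_fun (contphi i j)) => //.
pose S := interaction_values lam phi r.
have i0 : 'I_N := Ordinal N0.
have coordr : forall (y : state R N d), (forall k, eucl (y k) <= r) ->
    forall j k, `|y j 0 k| <= r.
  by move=> y hy j k; apply: le_trans (@coord_le_eucl R d (y j) k) (hy j).
have S_ub : has_ubound S.
  exists (Lam r * Phi r) => z [i [j [y [hy ->]]]].
  apply: ler_pM; [exact: ltW | exact: ltW | |].
    exact: lamb r y r0 (coordr y hy) i.
  exact: phib r _ _ r0 (coordr y hy i) (coordr y hy j) i j.
have S_lb : has_lbound S.
  exists 0 => z [i [j [y [hy ->]]]].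
  by rewrite mulr_ge0 // ltW.
have inS : forall t, 0 <= t -> forall i j,
    S (lam i (x t) * phi i j (x t i) (x t j)).
  by move=> t t0 i j; exists i, j, (x t); split => //; exact: ball.
have S_ne : S !=set0 by exists (lam i0 (x 0) * phi i0 i0 (x 0 i0) (x 0 i0)); exact: inS.
have mlo0 : 0 <= m_lo.
  rewrite /m_lo -/S; apply: (lb_le_inf S_ne) => z [i [j [y [hy ->]]]].
  by rewrite mulr_ge0 // ltW.
pose Mt := fun i j s => lam i (x s) * (M i j s * phi i j (x s i) (x s j)).
have mMt : forall i j, measurable_fun `[0 : R, +oo[ (Mt i j).
  move=> i j; apply: measurable_funM => //.
  by apply: measurable_funM.
have rMt : forall i j t, 0 <= t -> 0 <= Mt i j t <= m_hi.
  move=> i j t t0.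
  have /andP[M0 M1] := hMrange i j t t0.
  have pp := hphi_pos i j (x t i) (x t j).
  have lp := hlam_pos i (x t).
  apply/andP; split.
    by rewrite /Mt /=; apply: mulr_ge0; [exact: ltW | apply: mulr_ge0 => //; exact: ltW].
  rewrite /m_hi -/S; apply: le_trans _ (ub_le_sup S_ub (inS t t0 i j)).
  have lpp := mulr_gt0 lp pp.
  rewrite /Mt /=; nra.
exists Mt; split => //; split => //; split.
  move=> t ht i k.
  have pe : forall s, ((N%:R^-1 *: \sum_(j < N) Mt i j s *: (x s j - x s i)) 0 k)
      = F s i k.
    move=> s; rewrite Fcoord Fc /Mt /= !mulr_sumr; apply: eq_bigr => j _; ring.
  have [h1 h2] := hF t ht i k.
  split.
    apply: eq_integrable h1 => // s _ /=; by rewrite pe.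
  rewrite h2; congr (_ + _); apply: eq_Rintegral => s _ /=; by rewrite pe.
move=> t ht i j; rewrite /conn_arrow => h.
have sub : `[t, t + T] `<=` `[0 : R, +oo[.
  move=> z /=; rewrite !in_itv /= andbT => /andP[tz _]; exact: le_trans ht tz.
have pos : forall s, [set` `[t, t + T]] s -> 0 <= s.
  by move=> s hs; have := sub s hs; rewrite /= in_itv /= andbT.
have iM : (lebesgue_measure).-integrable `[t, t + T] (EFin \o M i j).
  apply: (@int_bd R _ t (t + T) 1); first by left.
    exact: measurable_funS (hMmeas i j).
  move=> s /= hs; have /andP[M0 M1] := hMrange i j s (pos s hs).
  by rewrite ger0_norm.
have iMt : (lebesgue_measure).-integrable `[t, t + T] (EFin \o Mt i j).
  apply: (@int_bd R _ t (t + T) m_hi); first by left.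
    exact: measurable_funS (mMt i j).
  move=> s /= hs; have /andP[M0 M1] := rMt i j s (pos s hs).
  by rewrite ger0_norm.
have hle : \int[lebesgue_measure]_(s in `[t, t + T]) (m_lo * M i j s) <=
           \int[lebesgue_measure]_(s in `[t, t + T]) Mt i j s.
  apply: le_Rintegral => //.
    have := integrableZl _ m_lo iM; move=> /(_ (measurable_itv _)).
    by apply: eq_integrable => // s _ /=.
  move=> s hs; have s0 := pos s hs.
  have /andP[M0 M1] := hMrange i j s s0.
  have hlo : m_lo <= lam i (x s) * phi i j (x s i) (x s j).
    rewrite /m_lo -/S; apply: (ge_inf S_lb); exact: inS.
  rewrite /Mt /=; nra.
rewrite RintegralZl // in hle.
have Ti : 0 <= T^-1 by rewrite invr_ge0 ltW.
have h3 := ler_wpM2l mlo0 h.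
have h4 := ler_wpM2l Ti hle.
apply: le_trans h3 _.
by rewrite mulrCA.
Qed.
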